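(* Let $A$ be a generic real $6\times6$ skew-Hamiltonian matrix, let $p,q,r$ be smooth functions on $\mathbb R^6$, and define for $\varepsilon\in\mathbb R$ $$\Pi(x)=(1-\varepsilon^2p(x))J-\varepsilon^2q(x)A^{\rm T}J-\varepsilon^2r(x)(A^{\rm T})^2J.$$ Then $\Pi$ is a Poisson tensor for all $\varepsilon$ if and only if $\nabla q=C_1\nabla r$ and $\nabla p=C_2\nabla r$, where $C_1=A-aI$, $C_2=A^2-aA+bI$, $a=\tfrac12\operatorname{tr}A$, $b=\tfrac18(\operatorname{tr}A)^2-\tfrac14\operatorname{tr}(A^2)$.
   Context: $J=\begin{pmatrix}0&I_3\\-I_3&0\end{pmatrix}$; a real $6\times6$ matrix $A$ is skew-Hamiltonian if $A^{\rm T}J=JA$. Genericity: the characteristic polynomial of $A$ (a square of a cubic) has three pairwise distinct roots, each a double eigenvalue. A (skew-symmetric) matrix-valued function $\Pi$ is a Poisson tensor if the bracket $\{F,G\}=(\nabla F)^{\rm T}\Pi\nabla G$ satisfies the Jacobi identity, i.e. $\{x_i,\{x_j,x_k\}\}+\{x_j,\{x_k,x_i\}\}+\{x_k,\{x_i,x_j\}\}=0$ for all $i,j,k$. *)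

(* Defs.v *)
From Stdlib Require Import Reals Lra ClassicalEpsilon.
Open Scope R_scope.

(** Points of R^6 are read off the first six coordinates of x : nat -> R.
    Functions on R^6 are genuinely 6-argument real functions. *)
Definition R6fun := R -> R -> R -> R -> R -> R -> R.
Definition ev6 (f : R6fun) (x : nat -> R) : R := f (x 0%nat) (x 1%nat) (x 2%nat) (x 3%nat) (x 4%nat) (x 5%nat).
Definition upd (x : nat -> R) (i : nat) (t : R) : nat -> R :=
  fun m => if Nat.eqb m i then t else x m.

Definition cont6 (f : R6fun) : Prop :=
  forall (x : nat -> R) (e : R), 0 < e -> exists d, 0 < d /\
    forall y : nat -> R, (forall i, (i < 6)%nat -> Rabs (y i - x i) < d) ->
      Rabs (ev6 f y - ev6 f x) < e.

Fixpoint Ck (k : nat) (f : R6fun) : Prop :=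
  match k with
  | O => cont6 f
  | S k' => cont6 f /\ exists g : nat -> R6fun,
      (forall i x, (i < 6)%nat ->
         derivable_pt_lim (fun t => ev6 f (upd x i t)) (x i) (ev6 (g i) x)) /\
      (forall i, (i < 6)%nat -> Ck k' (g i))
  end.
Definition smooth (f : R6fun) : Prop := forall k, Ck k f.

Definition pd (f : R6fun) (i : nat) (x : nat -> R) : R :=
  epsilon (inhabits 0) (fun l => derivable_pt_lim (fun t => ev6 f (upd x i t)) (x i) l).

Definition sum6 (f : nat -> R) : R := sum_f_R0 f 5.
Definition Mat := nat -> nat -> R.
Definition mmul (A B : Mat) : Mat := fun i j => sum6 (fun k => A i k * B k j).
Definition trans (A : Mat) : Mat := fun i j => A j i.
Definition madd (A B : Mat) : Mat := fun i j => A i j + B i j.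
Definition mscale (c : R) (A : Mat) : Mat := fun i j => c * A i j.
Definition Id6 : Mat := fun i j => if Nat.eqb i j then 1 else 0.
Definition trace (A : Mat) : R := sum6 (fun i => A i i).

(** J = [[0, I_3], [-I_3, 0]] *)
Definition Jm : Mat := fun i j =>
  if (Nat.ltb i 3 && Nat.eqb j (i + 3))%bool then 1
  else if (Nat.leb 3 i && Nat.ltb i 6 && Nat.eqb (j + 3) i)%bool then -1
  else 0.

Definition skew_hamiltonian (A : Mat) : Prop :=
  forall i j, (i < 6)%nat -> (j < 6)%nat -> mmul (trans A) Jm i j = mmul Jm A i j.

(** Determinant of the leading n x n block, by Laplace expansion along row 0. *)
Definition minor0 (j : nat) (M : Mat) : Mat :=
  fun i k => M (S i) (if Nat.ltb k j then k else S k).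
Fixpoint detn (n : nat) (M : Mat) : R :=
  match n with
  | O => 1
  | S m => sum_f_R0 (fun j => (-1) ^ j * M 0%nat j * detn m (minor0 j M)) m
  end.
Definition charpoly6 (A : Mat) (lam : R) : R :=
  detn 6 (fun i j => lam * Id6 i j - A i j).

Definition C := (R * R)%type.
Definition Cadd (z w : C) : C := (fst z + fst w, snd z + snd w).
Definition Cmul (z w : C) : C :=
  (fst z * fst w - snd z * snd w, fst z * snd w + snd z * fst w).
Definition Creal (a : R) : C := (a, 0).
Definition cubic_evalC (c2 c1 c0 : R) (z : C) : C :=
  Cadd (Cmul z (Cmul z z))
   (Cadd (Cmul (Creal c2) (Cmul z z)) (Cadd (Cmul (Creal c1) z) (Creal c0))).

(** Genericity: the characteristic polynomial is the square of a (monic) cubic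
    having three pairwise distinct (complex) roots, each thus a double eigenvalue. *)
Definition generic_sh (A : Mat) : Prop :=
  exists c2 c1 c0 : R,
    (forall lam, charpoly6 A lam = (lam ^ 3 + c2 * lam ^ 2 + c1 * lam + c0) ^ 2) /\
    exists z1 z2 z3 : C, z1 <> z2 /\ z1 <> z3 /\ z2 <> z3 /\
      cubic_evalC c2 c1 c0 z1 = (0, 0) /\ cubic_evalC c2 c1 c0 z2 = (0, 0) /\
      cubic_evalC c2 c1 c0 z3 = (0, 0).

Definition poisson_tensor (Pi : nat -> nat -> R6fun) : Prop :=
  (forall i j x, (i < 6)%nat -> (j < 6)%nat -> ev6 (Pi i j) x = - ev6 (Pi j i) x) /\
  (forall i j k x, (i < 6)%nat -> (j < 6)%nat -> (k < 6)%nat ->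
     (* {x_i,{x_j,x_k}} = sum_l Pi_il d_l Pi_jk *)
     sum6 (fun l => ev6 (Pi i l) x * pd (Pi j k) l x)
   + sum6 (fun l => ev6 (Pi j l) x * pd (Pi k i) l x)
   + sum6 (fun l => ev6 (Pi k l) x * pd (Pi i j) l x) = 0).

Definition PiT (eps : R) (A : Mat) (p q r : R6fun) : nat -> nat -> R6fun :=
  fun j k => fun a0 a1 a2 a3 a4 a5 =>
    (1 - eps ^ 2 * p a0 a1 a2 a3 a4 a5) * Jm j k
    - eps ^ 2 * q a0 a1 a2 a3 a4 a5 * mmul (trans A) Jm j k
    - eps ^ 2 * r a0 a1 a2 a3 a4 a5 * mmul (mmul (trans A) (trans A)) Jm j k.

Definition a_coef (A : Mat) : R := trace A / 2.
Definition b_coef (A : Mat) : R := (trace A) ^ 2 / 8 - trace (mmul A A) / 4.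
Definition C1m (A : Mat) : Mat := madd A (mscale (- a_coef A) Id6).
Definition C2m (A : Mat) : Mat :=
  madd (mmul A A) (madd (mscale (- a_coef A) A) (mscale (b_coef A) Id6)).

Definition grad_rel (f : R6fun) (M : Mat) (g : R6fun) : Prop :=
  forall x i, (i < 6)%nat -> pd f i x = sum6 (fun j => M i j * pd g j x).

(* Main.v *)
Require Import Defs.
From Stdlib Require Import Reals Lra Lia Arith ClassicalEpsilon.
Require Coquelicot.Complex.
Open Scope R_scope.
Definition SHeqs (A : Mat) : Prop :=
  A 3%nat 3%nat = A 0%nat 0%nat /\
  A 3%nat 4%nat = A 1%nat 0%nat /\
  A 3%nat 5%nat = A 2%nat 0%nat /\
  A 4%nat 3%nat = A 0%nat 1%nat /\
  A 4%nat 4%nat = A 1%nat 1%nat /\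
  A 4%nat 5%nat = A 2%nat 1%nat /\
  A 5%nat 3%nat = A 0%nat 2%nat /\
  A 5%nat 4%nat = A 1%nat 2%nat /\
  A 5%nat 5%nat = A 2%nat 2%nat /\
  A 0%nat 3%nat = 0 /\
  A 1%nat 4%nat = 0 /\
  A 2%nat 5%nat = 0 /\
  A 3%nat 0%nat = 0 /\
  A 4%nat 1%nat = 0 /\
  A 5%nat 2%nat = 0 /\
  A 1%nat 3%nat = - A 0%nat 4%nat /\
  A 2%nat 3%nat = - A 0%nat 5%nat /\
  A 2%nat 4%nat = - A 1%nat 5%nat /\
  A 4%nat 0%nat = - A 3%nat 1%nat /\
  A 5%nat 0%nat = - A 3%nat 2%nat /\
  A 5%nat 1%nat = - A 4%nat 2%nat.
Ltac shrw H := let H' := fresh in pose proof H as H'; destruct H' as (h0 & h1 & h2 & h3 & h4 & h5 & h6 & h7 & h8 & h9 & h10 & h11 & h12 & h13 & h14 & h15 & h16 & h17 & h18 & h19 & h20); rewrite ?h0, ?h1, ?h2, ?h3, ?h4, ?h5, ?h6, ?h7, ?h8, ?h9, ?h10, ?h11, ?h12, ?h13, ?h14, ?h15, ?h16, ?h17, ?h18, ?h19, ?h20; clear h0 h1 h2 h3 h4 h5 h6 h7 h8 h9 h10 h11 h12 h13 h14 h15 h16 h17 h18 h19 h20.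
Definition pf6 (B : Mat) : R := B 0%nat 1%nat * (B 2%nat 3%nat * (B 4%nat 5%nat) - B 2%nat 4%nat * (B 3%nat 5%nat) + B 2%nat 5%nat * (B 3%nat 4%nat)) - B 0%nat 2%nat * (B 1%nat 3%nat * (B 4%nat 5%nat) - B 1%nat 4%nat * (B 3%nat 5%nat) + B 1%nat 5%nat * (B 3%nat 4%nat)) + B 0%nat 3%nat * (B 1%nat 2%nat * (B 4%nat 5%nat) - B 1%nat 4%nat * (B 2%nat 5%nat) + B 1%nat 5%nat * (B 2%nat 4%nat)) - B 0%nat 4%nat * (B 1%nat 2%nat * (B 3%nat 5%nat) - B 1%nat 3%nat * (B 2%nat 5%nat) + B 1%nat 5%nat * (B 2%nat 3%nat)) + B 0%nat 5%nat * (B 1%nat 2%nat * (B 3%nat 4%nat) - B 1%nat 3%nat * (B 2%nat 4%nat) + B 1%nat 4%nat * (B 2%nat 3%nat)).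
Definition Ae (A : Mat) (i j : nat) : R :=
  match i, j with
  | 0%nat, 0%nat => A 0%nat 0%nat
  | 0%nat, 1%nat => A 0%nat 1%nat
  | 0%nat, 2%nat => A 0%nat 2%nat
  | 0%nat, 3%nat => 0
  | 0%nat, 4%nat => A 0%nat 4%nat
  | 0%nat, 5%nat => A 0%nat 5%nat
  | 1%nat, 0%nat => A 1%nat 0%nat
  | 1%nat, 1%nat => A 1%nat 1%nat
  | 1%nat, 2%nat => A 1%nat 2%nat
  | 1%nat, 3%nat => - A 0%nat 4%nat
  | 1%nat, 4%nat => 0
  | 1%nat, 5%nat => A 1%nat 5%nat
  | 2%nat, 0%nat => A 2%nat 0%nat
  | 2%nat, 1%nat => A 2%nat 1%nat
  | 2%nat, 2%nat => A 2%nat 2%nat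
  | 2%nat, 3%nat => - A 0%nat 5%nat
  | 2%nat, 4%nat => - A 1%nat 5%nat
  | 2%nat, 5%nat => 0
  | 3%nat, 0%nat => 0
  | 3%nat, 1%nat => A 3%nat 1%nat
  | 3%nat, 2%nat => A 3%nat 2%nat
  | 3%nat, 3%nat => A 0%nat 0%nat
  | 3%nat, 4%nat => A 1%nat 0%nat
  | 3%nat, 5%nat => A 2%nat 0%nat
  | 4%nat, 0%nat => - A 3%nat 1%nat
  | 4%nat, 1%nat => 0
  | 4%nat, 2%nat => A 4%nat 2%nat
  | 4%nat, 3%nat => A 0%nat 1%nat
  | 4%nat, 4%nat => A 1%nat 1%nat
  | 4%nat, 5%nat => A 2%nat 1%nat
  | 5%nat, 0%nat => - A 3%nat 2%nat
  | 5%nat, 1%nat => - A 4%nat 2%nat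
  | 5%nat, 2%nat => 0
  | 5%nat, 3%nat => A 0%nat 2%nat
  | 5%nat, 4%nat => A 1%nat 2%nat
  | 5%nat, 5%nat => A 2%nat 2%nat
  | _, _ => 0
  end.
Definition M1e (A : Mat) (i j : nat) : R :=
  match i, j with
  | 0%nat, 0%nat => 0
  | 0%nat, 1%nat => A 3%nat 1%nat
  | 0%nat, 2%nat => A 3%nat 2%nat
  | 0%nat, 3%nat => A 0%nat 0%nat
  | 0%nat, 4%nat => A 1%nat 0%nat
  | 0%nat, 5%nat => A 2%nat 0%nat
  | 1%nat, 0%nat => - A 3%nat 1%nat
  | 1%nat, 1%nat => 0
  | 1%nat, 2%nat => A 4%nat 2%nat
  | 1%nat, 3%nat => A 0%nat 1%nat
  | 1%nat, 4%nat => A 1%nat 1%nat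
  | 1%nat, 5%nat => A 2%nat 1%nat
  | 2%nat, 0%nat => - A 3%nat 2%nat
  | 2%nat, 1%nat => - A 4%nat 2%nat
  | 2%nat, 2%nat => 0
  | 2%nat, 3%nat => A 0%nat 2%nat
  | 2%nat, 4%nat => A 1%nat 2%nat
  | 2%nat, 5%nat => A 2%nat 2%nat
  | 3%nat, 0%nat => - A 0%nat 0%nat
  | 3%nat, 1%nat => - A 0%nat 1%nat
  | 3%nat, 2%nat => - A 0%nat 2%nat
  | 3%nat, 3%nat => 0
  | 3%nat, 4%nat => - A 0%nat 4%nat
  | 3%nat, 5%nat => - A 0%nat 5%nat
  | 4%nat, 0%nat => - A 1%nat 0%nat
  | 4%nat, 1%nat => - A 1%nat 1%nat
  | 4%nat, 2%nat => - A 1%nat 2%nat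
  | 4%nat, 3%nat => A 0%nat 4%nat
  | 4%nat, 4%nat => 0
  | 4%nat, 5%nat => - A 1%nat 5%nat
  | 5%nat, 0%nat => - A 2%nat 0%nat
  | 5%nat, 1%nat => - A 2%nat 1%nat
  | 5%nat, 2%nat => - A 2%nat 2%nat
  | 5%nat, 3%nat => A 0%nat 5%nat
  | 5%nat, 4%nat => A 1%nat 5%nat
  | 5%nat, 5%nat => 0
  | _, _ => 0
  end.
Definition M2e (A : Mat) (i j : nat) : R :=
  match i, j with
  | 0%nat, 0%nat => 0
  | 0%nat, 1%nat => A 0%nat 0%nat * A 3%nat 1%nat + A 1%nat 1%nat * A 3%nat 1%nat - A 2%nat 0%nat * A 4%nat 2%nat + A 2%nat 1%nat * A 3%nat 2%nat
  | 0%nat, 2%nat => A 0%nat 0%nat * A 3%nat 2%nat + A 1%nat 0%nat * A 4%nat 2%nat + A 1%nat 2%nat * A 3%nat 1%nat + A 2%nat 2%nat * A 3%nat 2%nat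
  | 0%nat, 3%nat => A 0%nat 0%nat * A 0%nat 0%nat + A 0%nat 1%nat * A 1%nat 0%nat + A 0%nat 2%nat * A 2%nat 0%nat - A 0%nat 4%nat * A 3%nat 1%nat - A 0%nat 5%nat * A 3%nat 2%nat
  | 0%nat, 4%nat => A 0%nat 0%nat * A 1%nat 0%nat + A 1%nat 0%nat * A 1%nat 1%nat + A 1%nat 2%nat * A 2%nat 0%nat - A 1%nat 5%nat * A 3%nat 2%nat
  | 0%nat, 5%nat => A 0%nat 0%nat * A 2%nat 0%nat + A 1%nat 0%nat * A 2%nat 1%nat + A 1%nat 5%nat * A 3%nat 1%nat + A 2%nat 0%nat * A 2%nat 2%nat
  | 1%nat, 0%nat => - A 0%nat 0%nat * A 3%nat 1%nat - A 1%nat 1%nat * A 3%nat 1%nat + A 2%nat 0%nat * A 4%nat 2%nat - A 2%nat 1%nat * A 3%nat 2%nat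
  | 1%nat, 1%nat => 0
  | 1%nat, 2%nat => A 0%nat 1%nat * A 3%nat 2%nat - A 0%nat 2%nat * A 3%nat 1%nat + A 1%nat 1%nat * A 4%nat 2%nat + A 2%nat 2%nat * A 4%nat 2%nat
  | 1%nat, 3%nat => A 0%nat 0%nat * A 0%nat 1%nat + A 0%nat 1%nat * A 1%nat 1%nat + A 0%nat 2%nat * A 2%nat 1%nat - A 0%nat 5%nat * A 4%nat 2%nat
  | 1%nat, 4%nat => A 0%nat 1%nat * A 1%nat 0%nat - A 0%nat 4%nat * A 3%nat 1%nat + A 1%nat 1%nat * A 1%nat 1%nat + A 1%nat 2%nat * A 2%nat 1%nat - A 1%nat 5%nat * A 4%nat 2%nat
  | 1%nat, 5%nat => A 0%nat 1%nat * A 2%nat 0%nat - A 0%nat 5%nat * A 3%nat 1%nat + A 1%nat 1%nat * A 2%nat 1%nat + A 2%nat 1%nat * A 2%nat 2%nat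
  | 2%nat, 0%nat => - A 0%nat 0%nat * A 3%nat 2%nat - A 1%nat 0%nat * A 4%nat 2%nat - A 1%nat 2%nat * A 3%nat 1%nat - A 2%nat 2%nat * A 3%nat 2%nat
  | 2%nat, 1%nat => - A 0%nat 1%nat * A 3%nat 2%nat + A 0%nat 2%nat * A 3%nat 1%nat - A 1%nat 1%nat * A 4%nat 2%nat - A 2%nat 2%nat * A 4%nat 2%nat
  | 2%nat, 2%nat => 0
  | 2%nat, 3%nat => A 0%nat 0%nat * A 0%nat 2%nat + A 0%nat 1%nat * A 1%nat 2%nat + A 0%nat 2%nat * A 2%nat 2%nat + A 0%nat 4%nat * A 4%nat 2%nat
  | 2%nat, 4%nat => A 0%nat 2%nat * A 1%nat 0%nat - A 0%nat 4%nat * A 3%nat 2%nat + A 1%nat 1%nat * A 1%nat 2%nat + A 1%nat 2%nat * A 2%nat 2%nat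
  | 2%nat, 5%nat => A 0%nat 2%nat * A 2%nat 0%nat - A 0%nat 5%nat * A 3%nat 2%nat + A 1%nat 2%nat * A 2%nat 1%nat - A 1%nat 5%nat * A 4%nat 2%nat + A 2%nat 2%nat * A 2%nat 2%nat
  | 3%nat, 0%nat => - A 0%nat 0%nat * A 0%nat 0%nat - A 0%nat 1%nat * A 1%nat 0%nat - A 0%nat 2%nat * A 2%nat 0%nat + A 0%nat 4%nat * A 3%nat 1%nat + A 0%nat 5%nat * A 3%nat 2%nat
  | 3%nat, 1%nat => - A 0%nat 0%nat * A 0%nat 1%nat - A 0%nat 1%nat * A 1%nat 1%nat - A 0%nat 2%nat * A 2%nat 1%nat + A 0%nat 5%nat * A 4%nat 2%nat
  | 3%nat, 2%nat => - A 0%nat 0%nat * A 0%nat 2%nat - A 0%nat 1%nat * A 1%nat 2%nat - A 0%nat 2%nat * A 2%nat 2%nat - A 0%nat 4%nat * A 4%nat 2%nat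
  | 3%nat, 3%nat => 0
  | 3%nat, 4%nat => - A 0%nat 0%nat * A 0%nat 4%nat + A 0%nat 2%nat * A 1%nat 5%nat - A 0%nat 4%nat * A 1%nat 1%nat - A 0%nat 5%nat * A 1%nat 2%nat
  | 3%nat, 5%nat => - A 0%nat 0%nat * A 0%nat 5%nat - A 0%nat 1%nat * A 1%nat 5%nat - A 0%nat 4%nat * A 2%nat 1%nat - A 0%nat 5%nat * A 2%nat 2%nat
  | 4%nat, 0%nat => - A 0%nat 0%nat * A 1%nat 0%nat - A 1%nat 0%nat * A 1%nat 1%nat - A 1%nat 2%nat * A 2%nat 0%nat + A 1%nat 5%nat * A 3%nat 2%nat
  | 4%nat, 1%nat => - A 0%nat 1%nat * A 1%nat 0%nat + A 0%nat 4%nat * A 3%nat 1%nat - A 1%nat 1%nat * A 1%nat 1%nat - A 1%nat 2%nat * A 2%nat 1%nat + A 1%nat 5%nat * A 4%nat 2%nat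
  | 4%nat, 2%nat => - A 0%nat 2%nat * A 1%nat 0%nat + A 0%nat 4%nat * A 3%nat 2%nat - A 1%nat 1%nat * A 1%nat 2%nat - A 1%nat 2%nat * A 2%nat 2%nat
  | 4%nat, 3%nat => A 0%nat 0%nat * A 0%nat 4%nat - A 0%nat 2%nat * A 1%nat 5%nat + A 0%nat 4%nat * A 1%nat 1%nat + A 0%nat 5%nat * A 1%nat 2%nat
  | 4%nat, 4%nat => 0
  | 4%nat, 5%nat => A 0%nat 4%nat * A 2%nat 0%nat - A 0%nat 5%nat * A 1%nat 0%nat - A 1%nat 1%nat * A 1%nat 5%nat - A 1%nat 5%nat * A 2%nat 2%nat
  | 5%nat, 0%nat => - A 0%nat 0%nat * A 2%nat 0%nat - A 1%nat 0%nat * A 2%nat 1%nat - A 1%nat 5%nat * A 3%nat 1%nat - A 2%nat 0%nat * A 2%nat 2%nat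
  | 5%nat, 1%nat => - A 0%nat 1%nat * A 2%nat 0%nat + A 0%nat 5%nat * A 3%nat 1%nat - A 1%nat 1%nat * A 2%nat 1%nat - A 2%nat 1%nat * A 2%nat 2%nat
  | 5%nat, 2%nat => - A 0%nat 2%nat * A 2%nat 0%nat + A 0%nat 5%nat * A 3%nat 2%nat - A 1%nat 2%nat * A 2%nat 1%nat + A 1%nat 5%nat * A 4%nat 2%nat - A 2%nat 2%nat * A 2%nat 2%nat
  | 5%nat, 3%nat => A 0%nat 0%nat * A 0%nat 5%nat + A 0%nat 1%nat * A 1%nat 5%nat + A 0%nat 4%nat * A 2%nat 1%nat + A 0%nat 5%nat * A 2%nat 2%nat
  | 5%nat, 4%nat => - A 0%nat 4%nat * A 2%nat 0%nat + A 0%nat 5%nat * A 1%nat 0%nat + A 1%nat 1%nat * A 1%nat 5%nat + A 1%nat 5%nat * A 2%nat 2%nat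
  | 5%nat, 5%nat => 0
  | _, _ => 0
  end.
Definition VP (A : Mat) (y : nat -> R) (m : nat) : R :=
  match m with
  | 0%nat => A 1%nat 0%nat * A 2%nat 1%nat * y 5%nat - A 1%nat 0%nat * A 2%nat 2%nat * y 4%nat + A 1%nat 0%nat * A 4%nat 2%nat * y 2%nat - A 1%nat 1%nat * A 2%nat 0%nat * y 5%nat + A 1%nat 1%nat * A 2%nat 2%nat * y 3%nat - A 1%nat 1%nat * A 3%nat 2%nat * y 2%nat + A 1%nat 2%nat * A 2%nat 0%nat * y 4%nat - A 1%nat 2%nat * A 2%nat 1%nat * y 3%nat + A 1%nat 2%nat * A 3%nat 1%nat * y 2%nat + A 1%nat 5%nat * A 3%nat 1%nat * y 5%nat - A 1%nat 5%nat * A 3%nat 2%nat * y 4%nat + A 1%nat 5%nat * A 4%nat 2%nat * y 3%nat - A 2%nat 0%nat * A 4%nat 2%nat * y 1%nat + A 2%nat 1%nat * A 3%nat 2%nat * y 1%nat - A 2%nat 2%nat * A 3%nat 1%nat * y 1%nat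
  | 1%nat => - A 0%nat 0%nat * A 2%nat 1%nat * y 5%nat + A 0%nat 0%nat * A 2%nat 2%nat * y 4%nat - A 0%nat 0%nat * A 4%nat 2%nat * y 2%nat + A 0%nat 1%nat * A 2%nat 0%nat * y 5%nat - A 0%nat 1%nat * A 2%nat 2%nat * y 3%nat + A 0%nat 1%nat * A 3%nat 2%nat * y 2%nat - A 0%nat 2%nat * A 2%nat 0%nat * y 4%nat + A 0%nat 2%nat * A 2%nat 1%nat * y 3%nat - A 0%nat 2%nat * A 3%nat 1%nat * y 2%nat - A 0%nat 5%nat * A 3%nat 1%nat * y 5%nat + A 0%nat 5%nat * A 3%nat 2%nat * y 4%nat - A 0%nat 5%nat * A 4%nat 2%nat * y 3%nat + A 2%nat 0%nat * A 4%nat 2%nat * y 0%nat - A 2%nat 1%nat * A 3%nat 2%nat * y 0%nat + A 2%nat 2%nat * A 3%nat 1%nat * y 0%nat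
  | 2%nat => A 0%nat 0%nat * A 1%nat 1%nat * y 5%nat - A 0%nat 0%nat * A 1%nat 2%nat * y 4%nat + A 0%nat 0%nat * A 4%nat 2%nat * y 1%nat - A 0%nat 1%nat * A 1%nat 0%nat * y 5%nat + A 0%nat 1%nat * A 1%nat 2%nat * y 3%nat - A 0%nat 1%nat * A 3%nat 2%nat * y 1%nat + A 0%nat 2%nat * A 1%nat 0%nat * y 4%nat - A 0%nat 2%nat * A 1%nat 1%nat * y 3%nat + A 0%nat 2%nat * A 3%nat 1%nat * y 1%nat + A 0%nat 4%nat * A 3%nat 1%nat * y 5%nat - A 0%nat 4%nat * A 3%nat 2%nat * y 4%nat + A 0%nat 4%nat * A 4%nat 2%nat * y 3%nat - A 1%nat 0%nat * A 4%nat 2%nat * y 0%nat + A 1%nat 1%nat * A 3%nat 2%nat * y 0%nat - A 1%nat 2%nat * A 3%nat 1%nat * y 0%nat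
  | 3%nat => - A 0%nat 1%nat * A 1%nat 2%nat * y 2%nat - A 0%nat 1%nat * A 1%nat 5%nat * y 5%nat + A 0%nat 1%nat * A 2%nat 2%nat * y 1%nat + A 0%nat 2%nat * A 1%nat 1%nat * y 2%nat + A 0%nat 2%nat * A 1%nat 5%nat * y 4%nat - A 0%nat 2%nat * A 2%nat 1%nat * y 1%nat - A 0%nat 4%nat * A 2%nat 1%nat * y 5%nat + A 0%nat 4%nat * A 2%nat 2%nat * y 4%nat - A 0%nat 4%nat * A 4%nat 2%nat * y 2%nat + A 0%nat 5%nat * A 1%nat 1%nat * y 5%nat - A 0%nat 5%nat * A 1%nat 2%nat * y 4%nat + A 0%nat 5%nat * A 4%nat 2%nat * y 1%nat - A 1%nat 1%nat * A 2%nat 2%nat * y 0%nat + A 1%nat 2%nat * A 2%nat 1%nat * y 0%nat - A 1%nat 5%nat * A 4%nat 2%nat * y 0%nat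
  | 4%nat => A 0%nat 0%nat * A 1%nat 2%nat * y 2%nat + A 0%nat 0%nat * A 1%nat 5%nat * y 5%nat - A 0%nat 0%nat * A 2%nat 2%nat * y 1%nat - A 0%nat 2%nat * A 1%nat 0%nat * y 2%nat - A 0%nat 2%nat * A 1%nat 5%nat * y 3%nat + A 0%nat 2%nat * A 2%nat 0%nat * y 1%nat + A 0%nat 4%nat * A 2%nat 0%nat * y 5%nat - A 0%nat 4%nat * A 2%nat 2%nat * y 3%nat + A 0%nat 4%nat * A 3%nat 2%nat * y 2%nat - A 0%nat 5%nat * A 1%nat 0%nat * y 5%nat + A 0%nat 5%nat * A 1%nat 2%nat * y 3%nat - A 0%nat 5%nat * A 3%nat 2%nat * y 1%nat + A 1%nat 0%nat * A 2%nat 2%nat * y 0%nat - A 1%nat 2%nat * A 2%nat 0%nat * y 0%nat + A 1%nat 5%nat * A 3%nat 2%nat * y 0%nat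
  | 5%nat => - A 0%nat 0%nat * A 1%nat 1%nat * y 2%nat - A 0%nat 0%nat * A 1%nat 5%nat * y 4%nat + A 0%nat 0%nat * A 2%nat 1%nat * y 1%nat + A 0%nat 1%nat * A 1%nat 0%nat * y 2%nat + A 0%nat 1%nat * A 1%nat 5%nat * y 3%nat - A 0%nat 1%nat * A 2%nat 0%nat * y 1%nat - A 0%nat 4%nat * A 2%nat 0%nat * y 4%nat + A 0%nat 4%nat * A 2%nat 1%nat * y 3%nat - A 0%nat 4%nat * A 3%nat 1%nat * y 2%nat + A 0%nat 5%nat * A 1%nat 0%nat * y 4%nat - A 0%nat 5%nat * A 1%nat 1%nat * y 3%nat + A 0%nat 5%nat * A 3%nat 1%nat * y 1%nat - A 1%nat 0%nat * A 2%nat 1%nat * y 0%nat + A 1%nat 1%nat * A 2%nat 0%nat * y 0%nat - A 1%nat 5%nat * A 3%nat 1%nat * y 0%nat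
  | _ => 0
  end.
Definition VQ (A : Mat) (y : nat -> R) (m : nat) : R :=
  match m with
  | 0%nat => A 1%nat 0%nat * y 4%nat - A 1%nat 1%nat * y 3%nat + A 2%nat 0%nat * y 5%nat - A 2%nat 2%nat * y 3%nat + A 3%nat 1%nat * y 1%nat + A 3%nat 2%nat * y 2%nat
  | 1%nat => - A 0%nat 0%nat * y 4%nat + A 0%nat 1%nat * y 3%nat + A 2%nat 1%nat * y 5%nat - A 2%nat 2%nat * y 4%nat - A 3%nat 1%nat * y 0%nat + A 4%nat 2%nat * y 2%nat
  | 2%nat => - A 0%nat 0%nat * y 5%nat + A 0%nat 2%nat * y 3%nat - A 1%nat 1%nat * y 5%nat + A 1%nat 2%nat * y 4%nat - A 3%nat 2%nat * y 0%nat - A 4%nat 2%nat * y 1%nat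
  | 3%nat => - A 0%nat 1%nat * y 1%nat - A 0%nat 2%nat * y 2%nat - A 0%nat 4%nat * y 4%nat - A 0%nat 5%nat * y 5%nat + A 1%nat 1%nat * y 0%nat + A 2%nat 2%nat * y 0%nat
  | 4%nat => A 0%nat 0%nat * y 1%nat + A 0%nat 4%nat * y 3%nat - A 1%nat 0%nat * y 0%nat - A 1%nat 2%nat * y 2%nat - A 1%nat 5%nat * y 5%nat + A 2%nat 2%nat * y 1%nat
  | 5%nat => A 0%nat 0%nat * y 2%nat + A 0%nat 5%nat * y 3%nat + A 1%nat 1%nat * y 2%nat + A 1%nat 5%nat * y 4%nat - A 2%nat 0%nat * y 0%nat - A 2%nat 1%nat * y 1%nat
  | _ => 0
  end.
Definition bp_check (A : Mat) : R := A 0%nat 0%nat * A 1%nat 1%nat + A 0%nat 0%nat * A 2%nat 2%nat - A 0%nat 1%nat * A 1%nat 0%nat - A 0%nat 2%nat * A 2%nat 0%nat + A 0%nat 4%nat * A 3%nat 1%nat + A 0%nat 5%nat * A 3%nat 2%nat + A 1%nat 1%nat * A 2%nat 2%nat - A 1%nat 2%nat * A 2%nat 1%nat + A 1%nat 5%nat * A 4%nat 2%nat.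
Definition pc0e (A : Mat) : R := - A 0%nat 0%nat * A 1%nat 1%nat * A 2%nat 2%nat + A 0%nat 0%nat * A 1%nat 2%nat * A 2%nat 1%nat - A 0%nat 0%nat * A 1%nat 5%nat * A 4%nat 2%nat + A 0%nat 1%nat * A 1%nat 0%nat * A 2%nat 2%nat - A 0%nat 1%nat * A 1%nat 2%nat * A 2%nat 0%nat + A 0%nat 1%nat * A 1%nat 5%nat * A 3%nat 2%nat - A 0%nat 2%nat * A 1%nat 0%nat * A 2%nat 1%nat + A 0%nat 2%nat * A 1%nat 1%nat * A 2%nat 0%nat - A 0%nat 2%nat * A 1%nat 5%nat * A 3%nat 1%nat - A 0%nat 4%nat * A 2%nat 0%nat * A 4%nat 2%nat + A 0%nat 4%nat * A 2%nat 1%nat * A 3%nat 2%nat - A 0%nat 4%nat * A 2%nat 2%nat * A 3%nat 1%nat + A 0%nat 5%nat * A 1%nat 0%nat * A 4%nat 2%nat - A 0%nat 5%nat * A 1%nat 1%nat * A 3%nat 2%nat + A 0%nat 5%nat * A 1%nat 2%nat * A 3%nat 1%nat.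
Definition M1 (A : Mat) := mmul (trans A) Jm.
Definition M2 (A : Mat) := mmul (mmul (trans A) (trans A)) Jm.
Definition mvec (M : Mat) (w : nat -> R) (i : nat) := sum6 (fun j => M i j * w j).
Definition Kf (A : Mat) (hp hq hr : nat -> R) (i j k : nat) : R :=
  hp i * Jm j k + hq i * M1 A j k + hr i * M2 A j k
+ (hp j * Jm k i + hq j * M1 A k i + hr j * M2 A k i)
+ (hp k * Jm i j + hq k * M1 A i j + hr k * M2 A i j).
Definition Kfe (A : Mat) (hp hq hr : nat -> R) (i j k : nat) : R :=
  hp i * Jm j k + hq i * M1e A j k + hr i * M2e A j k
+ (hp j * Jm k i + hq j * M1e A k i + hr j * M2e A k i)
+ (hp k * Jm i j + hq k * M1e A i j + hr k * M2e A i j).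
Definition VR (y : nat -> R) (m : nat) : R := mvec Jm y m.
Definition apoly (A : Mat) := A 0%nat 0%nat + A 1%nat 1%nat + A 2%nat 2%nat.
Definition mvT (A : Mat) (v : nat -> R) (m : nat) : R := sum6 (fun l => Ae A l m * v l).
Definition AJ (A : Mat) (j k : nat) : R := sum6 (fun l => Ae A j l * Jm l k).
Definition Gf (A : Mat) (f0 f1 f2 : R) (gp gq gr : nat -> R) (i j k : nat) : R :=
  sum6 (fun l => (f0 * Jm i l + f1 * M1 A i l + f2 * M2 A i l) * (gp l * Jm j k + gq l * M1 A j k + gr l * M2 A j k))
+ sum6 (fun l => (f0 * Jm j l + f1 * M1 A j l + f2 * M2 A j l) * (gp l * Jm k i + gq l * M1 A k i + gr l * M2 A k i))
+ sum6 (fun l => (f0 * Jm k l + f1 * M1 A k l + f2 * M2 A k l) * (gp l * Jm i j + gq l * M1 A i j + gr l * M2 A i j)).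
Definition discR (c2 c1 c0 : R) : R :=
  c2^2*c1^2 - 4*c1^3 - 4*c2^3*c0 - 27*c0^2 + 18*c2*c1*c0.

Ltac unf := cbv beta iota zeta delta [sum6 sum_f_R0 mmul trans madd mscale Id6 Jm trace C1m C2m a_coef b_coef Nat.ltb Nat.leb Nat.eqb andb Nat.add charpoly6 detn minor0 pow M1 M2 mvec Kf Kfe Ae M1e M2e VP VQ VR apoly bp_check pc0e mvT AJ] in *.
Ltac unf0 := cbv beta iota zeta delta [sum6 sum_f_R0 mmul trans madd mscale Id6 Jm C1m C2m Nat.ltb Nat.leb Nat.eqb andb Nat.add M1 M2 mvec] in *.
Ltac c6 i := destruct i as [|[|[|[|[|[|?]]]]]]; [ | | | | | | exfalso; lia].

Lemma sum6_ext (f g : nat -> R) : (forall l, (l < 6)%nat -> f l = g l) -> sum6 f = sum6 g.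
Proof.
  intro H. unfold sum6. cbv [sum_f_R0].
  rewrite (H 0%nat), (H 1%nat), (H 2%nat), (H 3%nat), (H 4%nat), (H 5%nat) by lia. reflexivity.
Qed.
Lemma sum6_zero (f : nat -> R) : (forall l, (l < 6)%nat -> f l = 0) -> sum6 f = 0.
Proof.
  intro H. rewrite (sum6_ext f (fun _ => 0) H). unfold sum6. cbv [sum_f_R0]. ring.
Qed.
Lemma mvec_ext M w w' m : (forall l, (l < 6)%nat -> w l = w' l) -> mvec M w m = mvec M w' m.
Proof. intro H. unfold mvec. apply sum6_ext. intros l Hl. rewrite H by exact Hl. reflexivity. Qed.
Lemma mvT_ext A w w' m : (forall l, (l < 6)%nat -> w l = w' l) -> mvT A w m = mvT A w' m.
Proof. intro H. unfold mvT. apply sum6_ext. intros l Hl. rewrite H by exact Hl. reflexivity. Qed.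
Lemma mvT_zero A w m : (forall l, (l < 6)%nat -> w l = 0) -> mvT A w m = 0.
Proof. intro H. unfold mvT. apply sum6_zero. intros l Hl. rewrite H by exact Hl. ring. Qed.
Lemma mvec_zero M w m : (forall l, (l < 6)%nat -> w l = 0) -> mvec M w m = 0.
Proof. intro H. unfold mvec. apply sum6_zero. intros l Hl. rewrite H by exact Hl. ring. Qed.
Lemma sh_of A : skew_hamiltonian A -> SHeqs A.
Proof.
  intro H.
  pose proof (H 0%nat 0%nat ltac:(lia) ltac:(lia)) as H00.
  pose proof (H 0%nat 1%nat ltac:(lia) ltac:(lia)) as H01.
  pose proof (H 0%nat 2%nat ltac:(lia) ltac:(lia)) as H02.
  pose proof (H 0%nat 3%nat ltac:(lia) ltac:(lia)) as H03.
  pose proof (H 0%nat 4%nat ltac:(lia) ltac:(lia)) as H04.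
  pose proof (H 0%nat 5%nat ltac:(lia) ltac:(lia)) as H05.
  pose proof (H 1%nat 0%nat ltac:(lia) ltac:(lia)) as H10.
  pose proof (H 1%nat 1%nat ltac:(lia) ltac:(lia)) as H11.
  pose proof (H 1%nat 2%nat ltac:(lia) ltac:(lia)) as H12.
  pose proof (H 1%nat 3%nat ltac:(lia) ltac:(lia)) as H13.
  pose proof (H 1%nat 4%nat ltac:(lia) ltac:(lia)) as H14.
  pose proof (H 1%nat 5%nat ltac:(lia) ltac:(lia)) as H15.
  pose proof (H 2%nat 0%nat ltac:(lia) ltac:(lia)) as H20.
  pose proof (H 2%nat 1%nat ltac:(lia) ltac:(lia)) as H21.
  pose proof (H 2%nat 2%nat ltac:(lia) ltac:(lia)) as H22.
  pose proof (H 2%nat 3%nat ltac:(lia) ltac:(lia)) as H23.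
  pose proof (H 2%nat 4%nat ltac:(lia) ltac:(lia)) as H24.
  pose proof (H 2%nat 5%nat ltac:(lia) ltac:(lia)) as H25.
  pose proof (H 3%nat 0%nat ltac:(lia) ltac:(lia)) as H30.
  pose proof (H 3%nat 1%nat ltac:(lia) ltac:(lia)) as H31.
  pose proof (H 3%nat 2%nat ltac:(lia) ltac:(lia)) as H32.
  pose proof (H 3%nat 3%nat ltac:(lia) ltac:(lia)) as H33.
  pose proof (H 3%nat 4%nat ltac:(lia) ltac:(lia)) as H34.
  pose proof (H 3%nat 5%nat ltac:(lia) ltac:(lia)) as H35.
  pose proof (H 4%nat 0%nat ltac:(lia) ltac:(lia)) as H40.
  pose proof (H 4%nat 1%nat ltac:(lia) ltac:(lia)) as H41.
  pose proof (H 4%nat 2%nat ltac:(lia) ltac:(lia)) as H42.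
  pose proof (H 4%nat 3%nat ltac:(lia) ltac:(lia)) as H43.
  pose proof (H 4%nat 4%nat ltac:(lia) ltac:(lia)) as H44.
  pose proof (H 4%nat 5%nat ltac:(lia) ltac:(lia)) as H45.
  pose proof (H 5%nat 0%nat ltac:(lia) ltac:(lia)) as H50.
  pose proof (H 5%nat 1%nat ltac:(lia) ltac:(lia)) as H51.
  pose proof (H 5%nat 2%nat ltac:(lia) ltac:(lia)) as H52.
  pose proof (H 5%nat 3%nat ltac:(lia) ltac:(lia)) as H53.
  pose proof (H 5%nat 4%nat ltac:(lia) ltac:(lia)) as H54.
  pose proof (H 5%nat 5%nat ltac:(lia) ltac:(lia)) as H55.
  clear H. unf.
  repeat split; lra.
Qed.


Lemma a_eq A : SHeqs A -> a_coef A = apoly A.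
Proof. intro H. unf. shrw H. field. Qed.
Lemma b_eq A : SHeqs A -> b_coef A = bp_check A.
Proof. intro H. unf. shrw H. field. Qed.
Lemma M1_e A i j : SHeqs A -> (i < 6)%nat -> (j < 6)%nat -> M1 A i j = M1e A i j.
Proof. intros H Hi Hj. c6 i; c6 j; unf; shrw H; ring. Qed.
Lemma M2_e A i j : SHeqs A -> (i < 6)%nat -> (j < 6)%nat -> M2 A i j = M2e A i j.
Proof. intros H Hi Hj. c6 i; c6 j; unf; shrw H; ring. Qed.
Lemma VP_e A y m : SHeqs A -> (m < 6)%nat -> mvec Jm (mvec (C2m A) y) m = VP A y m.
Proof. intros H Hm. unfold C2m. rewrite (a_eq A H), (b_eq A H). c6 m; unf; shrw H; ring. Qed.
Lemma VQ_e A y m : SHeqs A -> (m < 6)%nat -> mvec Jm (mvec (C1m A) y) m = VQ A y m.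
Proof. intros H Hm. unfold C1m. rewrite (a_eq A H). c6 m; unf; shrw H; ring. Qed.
Lemma M1vec A z m : SHeqs A -> (m < 6)%nat -> mvec (M1 A) z m = mvec Jm (mvec A z) m.
Proof. intros H Hm. c6 m; unf0; shrw H; ring. Qed.
Lemma M2vec A z m : SHeqs A -> (m < 6)%nat -> mvec (M2 A) z m = mvec Jm (mvec A (mvec A z)) m.
Proof. intros H Hm. c6 m; unf0; shrw H; ring. Qed.
Lemma comm2 A w m : (m < 6)%nat -> mvec A (mvec (C2m A) w) m = mvec (C2m A) (mvec A w) m.
Proof. intros Hm. c6 m; unf0; ring. Qed.
Lemma comm1 A w m : (m < 6)%nat -> mvec A (mvec (C1m A) w) m = mvec (C1m A) (mvec A w) m.
Proof. intros Hm. c6 m; unf0; ring. Qed.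
Lemma Jinv z m : (m < 6)%nat -> z m = - mvec Jm (mvec Jm z) m.
Proof. intros Hm. c6 m; unf; ring. Qed.
Lemma Jm_anti i j : (i < 6)%nat -> (j < 6)%nat -> Jm i j = - Jm j i.
Proof. intros Hi Hj. c6 i; c6 j; unf; ring. Qed.
Lemma M1e_anti A i j : (i < 6)%nat -> (j < 6)%nat -> M1e A i j = - M1e A j i.
Proof. intros Hi Hj. c6 i; c6 j; unf; ring. Qed.
Lemma M2e_anti A i j : (i < 6)%nat -> (j < 6)%nat -> M2e A i j = - M2e A j i.
Proof. intros Hi Hj. c6 i; c6 j; unf; ring. Qed.

Lemma alt_reduce (T : nat -> nat -> nat -> R) :
  (forall i j k, T j k i = T i j k) ->
  (forall i j k, (i < 6)%nat -> (j < 6)%nat -> (k < 6)%nat -> T i k j = - T i j k) ->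
  (forall i j k, (i < j)%nat -> (j < k)%nat -> (k < 6)%nat -> T i j k = 0) ->
  forall i j k, (i < 6)%nat -> (j < 6)%nat -> (k < 6)%nat -> T i j k = 0.
Proof.
  intros Hc Ha Hs i j k Hi Hj Hk.
  pose proof (Hc i j k) as e1. pose proof (Hc j k i) as e2.
  pose proof (Ha i j k Hi Hj Hk) as a1. pose proof (Ha j k i Hj Hk Hi) as a2.
  pose proof (Ha k i j Hk Hi Hj) as a3.
  destruct (lt_eq_lt_dec i j) as [[h1|h1]|h1];
  destruct (lt_eq_lt_dec j k) as [[h2|h2]|h2];
  destruct (lt_eq_lt_dec i k) as [[h3|h3]|h3];
  try (subst; lra); try lia.
  - pose proof (Hs i j k h1 h2 Hk). lra.
  - pose proof (Hs i k j h3 h2 Hj). lra.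
  - pose proof (Hs k i j h3 h1 Hj). lra.
  - pose proof (Hs j i k h1 h3 Hk). lra.
  - pose proof (Hs j k i h2 h3 Hi). lra.
  - pose proof (Hs k j i h2 h1 Hi). lra.
Qed.

Lemma core_sorted A y i j k : (i < j)%nat -> (j < k)%nat -> (k < 6)%nat ->
  Kfe A (VP A y) (VQ A y) (VR y) i j k = 0.
Proof.
  intros Hij Hjk Hk.
  assert (Hi : (i < 6)%nat) by lia. assert (Hj : (j < 6)%nat) by lia.
  c6 i; c6 j; c6 k; try (exfalso; lia); unf; ring.
Qed.

Lemma core_all A y i j k : (i < 6)%nat -> (j < 6)%nat -> (k < 6)%nat ->
  Kfe A (VP A y) (VQ A y) (VR y) i j k = 0.
Proof.
  apply (alt_reduce (fun i j k => Kfe A (VP A y) (VQ A y) (VR y) i j k)).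
  - intros. unfold Kfe. ring.
  - intros i' j' k' Hi' Hj' Hk'. unfold Kfe.
    rewrite (Jm_anti k' j' Hk' Hj'), (Jm_anti j' i' Hj' Hi'), (Jm_anti i' k' Hi' Hk').
    rewrite (M1e_anti A k' j' Hk' Hj'), (M1e_anti A j' i' Hj' Hi'), (M1e_anti A i' k' Hi' Hk').
    rewrite (M2e_anti A k' j' Hk' Hj'), (M2e_anti A j' i' Hj' Hi'), (M2e_anti A i' k' Hi' Hk').
    ring.
  - intros. apply core_sorted; assumption.
Qed.

Lemma E1_id A u v m : (m < 6)%nat ->
  sum6 (fun j => sum6 (fun k => Kfe A u v (fun _ => 0) m j k * Jm j k))
  = 2 * (2 * u m + apoly A * v m - mvT A v m).
Proof. intros Hm. c6 m; unf; ring. Qed.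
Lemma E2_id A u v m : (m < 6)%nat ->
  sum6 (fun j => sum6 (fun k => Kfe A u v (fun _ => 0) m j k * AJ A j k))
  = 2 * ((apoly A * u m - mvT A u m) + (apoly A ^ 2 - 2 * bp_check A) * v m - mvT A (mvT A v) m).
Proof. intros Hm. c6 m; unf; ring. Qed.
Lemma cubic_id A v m : (m < 6)%nat ->
  mvT A (mvT A (mvT A v)) m - apoly A * mvT A (mvT A v) m + bp_check A * mvT A v m + pc0e A * v m = 0.
Proof. intros Hm. c6 m; unf; ring. Qed.
Lemma char_id A (H : SHeqs A) lam :
  charpoly6 A lam = (lam^3 - apoly A * lam^2 + bp_check A * lam + pc0e A)^2.
Proof. unf. shrw H. ring. Qed.

Lemma pd_spec f i x l0 :
  derivable_pt_lim (fun t => ev6 f (upd x i t)) (x i) l0 -> pd f i x = l0.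
Proof.
  intro H. unfold pd.
  assert (E : exists l, derivable_pt_lim (fun t => ev6 f (upd x i t)) (x i) l) by (exists l0; exact H).
  pose proof (epsilon_spec (inhabits 0) _ E) as H2.
  exact (uniqueness_limite _ _ _ _ H2 H).
Qed.

Lemma dlin (f g h : R -> R) x df dg dh c0 c1 c2 e :
  derivable_pt_lim f x df -> derivable_pt_lim g x dg -> derivable_pt_lim h x dh ->
  derivable_pt_lim (fun t => (1 - e^2 * f t) * c0 - e^2 * g t * c1 - e^2 * h t * c2) x
    (-(e^2) * (df*c0 + dg*c1 + dh*c2)).
Proof.
  intros Hf Hg Hh.
  assert (H1 : derivable_pt_lim (fun t => (1 - e^2 * f t) * c0) x (- e^2 * df * c0)).
  { apply derivable_pt_lim_ext with (f := fun t => c0 * (1 - e^2 * f t)).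
    - intros; ring.
    - replace (- e^2 * df * c0) with (c0 * (0 - e^2 * df)) by ring.
      apply derivable_pt_lim_scal. apply derivable_pt_lim_minus.
      apply derivable_pt_lim_const. apply derivable_pt_lim_scal. exact Hf. }
  assert (H2 : forall k (u : R -> R) du, derivable_pt_lim u x du ->
      derivable_pt_lim (fun t => e^2 * u t * k) x (e^2 * du * k)).
  { intros k u du Hu.
    apply derivable_pt_lim_ext with (f := fun t => (e^2 * k) * u t).
    - intros; ring.
    - replace (e^2 * du * k) with ((e^2*k) * du) by ring.
      apply derivable_pt_lim_scal. exact Hu. }
  replace (-(e^2) * (df*c0 + dg*c1 + dh*c2)) with ((- e^2 * df * c0 - e^2 * dg * c1) - e^2 * dh * c2) by ring.
  apply derivable_pt_lim_minus; [apply derivable_pt_lim_minus|]; auto.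
Qed.

Module CX.
Import Coquelicot.Complex.
Local Open Scope C_scope.
Lemma sub_nz (z w : C) : z <> w -> z - w <> 0.
Proof. intros H E. apply H. replace z with ((z - w) + w) by ring. rewrite E. ring. Qed.
Lemma cancel (V w : C) : V <> 0 -> V * w = 0 -> w = 0.
Proof. intros HV E. replace w with ((V * w) / V) by (field; exact HV). rewrite E. field; exact HV. Qed.
Lemma disc_nz (c2 c1 c0 : R) (z1 z2 z3 : C) : z1 <> z2 -> z1 <> z3 -> z2 <> z3 ->
  z1 * (z1 * z1) + (RtoC c2 * (z1 * z1) + (RtoC c1 * z1 + RtoC c0)) = 0 ->
  z2 * (z2 * z2) + (RtoC c2 * (z2 * z2) + (RtoC c1 * z2 + RtoC c0)) = 0 ->
  z3 * (z3 * z3) + (RtoC c2 * (z3 * z3) + (RtoC c1 * z3 + RtoC c0)) = 0 ->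
  discR c2 c1 c0 <> 0%R.
Proof.
  intros n12 n13 n23 f1 f2 f3 Hd.
  pose proof (sub_nz _ _ n12) as d12. pose proof (sub_nz _ _ n13) as d13. pose proof (sub_nz _ _ n23) as d23.
  assert (HV : (z1 - z2) * (z1 - z3) * (z2 - z3) <> 0) by (repeat apply Cmult_neq_0; auto).
  assert (s : RtoC c2 + (z1 + z2 + z3) = 0).
  { apply (cancel _ _ HV).
    transitivity ((z1 * (z1 * z1) + (RtoC c2 * (z1 * z1) + (RtoC c1 * z1 + RtoC c0))) * (z2 - z3)
     - (z2 * (z2 * z2) + (RtoC c2 * (z2 * z2) + (RtoC c1 * z2 + RtoC c0))) * (z1 - z3)
     + (z3 * (z3 * z3) + (RtoC c2 * (z3 * z3) + (RtoC c1 * z3 + RtoC c0))) * (z1 - z2)).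
    - ring.
    - rewrite f1, f2, f3. ring. }
  assert (t : RtoC c1 - (z1*z2 + z1*z3 + z2*z3) = 0).
  { apply (cancel _ _ d12).
    transitivity ((z1 * (z1 * z1) + (RtoC c2 * (z1 * z1) + (RtoC c1 * z1 + RtoC c0)))
      - (z2 * (z2 * z2) + (RtoC c2 * (z2 * z2) + (RtoC c1 * z2 + RtoC c0)))
      - (RtoC c2 + (z1 + z2 + z3)) * (z1 * z1 - z2 * z2)).
    - ring.
    - rewrite f1, f2, s. ring. }
  assert (u : RtoC c0 + z1*z2*z3 = 0).
  { transitivity ((z1 * (z1 * z1) + (RtoC c2 * (z1 * z1) + (RtoC c1 * z1 + RtoC c0)))
      - (RtoC c2 + (z1 + z2 + z3)) * (z1 * z1) - (RtoC c1 - (z1*z2 + z1*z3 + z2*z3)) * z1).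
    - ring.
    - rewrite f1, s, t. ring. }
  assert (E : RtoC (discR c2 c1 c0) =
     RtoC c2 * RtoC c2 * RtoC c1 * RtoC c1 - 4 * (RtoC c1 * RtoC c1 * RtoC c1)
     - 4 * (RtoC c2 * RtoC c2 * RtoC c2) * RtoC c0 - 27 * (RtoC c0 * RtoC c0) + 18 * RtoC c2 * RtoC c1 * RtoC c0).
  { unfold discR. apply injective_projections; simpl; ring. }
  assert (c2e : RtoC c2 = - (z1 + z2 + z3)) by (replace (RtoC c2) with ((RtoC c2 + (z1 + z2 + z3)) - (z1 + z2 + z3)) by ring; rewrite s; ring).
  assert (c1e : RtoC c1 = z1*z2 + z1*z3 + z2*z3) by (replace (RtoC c1) with ((RtoC c1 - (z1*z2 + z1*z3 + z2*z3)) + (z1*z2 + z1*z3 + z2*z3)) by ring; rewrite t; ring).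
  assert (c0e : RtoC c0 = - (z1*z2*z3)) by (replace (RtoC c0) with ((RtoC c0 + z1*z2*z3) - z1*z2*z3) by ring; rewrite u; ring).
  rewrite c2e, c1e, c0e in E. rewrite Hd in E.
  apply (Cmult_neq_0 _ _ HV HV).
  transitivity (RtoC 0); [| reflexivity]. rewrite E. ring.
Qed.
End CX.

Lemma Kf_e A hp hq hr i j k : SHeqs A -> (i < 6)%nat -> (j < 6)%nat -> (k < 6)%nat ->
  Kf A hp hq hr i j k = Kfe A hp hq hr i j k.
Proof.
  intros H Hi Hj Hk. unfold Kf, Kfe.
  rewrite (M1_e A j k H Hj Hk), (M1_e A k i H Hk Hi), (M1_e A i j H Hi Hj).
  rewrite (M2_e A j k H Hj Hk), (M2_e A k i H Hk Hi), (M2_e A i j H Hi Hj).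
  reflexivity.
Qed.

Lemma Kf_zero A y hp hq hr i j k : SHeqs A -> (i < 6)%nat -> (j < 6)%nat -> (k < 6)%nat ->
  (forall m, (m < 6)%nat -> hp m = VP A y m) ->
  (forall m, (m < 6)%nat -> hq m = VQ A y m) ->
  (forall m, (m < 6)%nat -> hr m = VR y m) ->
  Kf A hp hq hr i j k = 0.
Proof.
  intros H Hi Hj Hk Ep Eq Er. rewrite (Kf_e A hp hq hr i j k H Hi Hj Hk).
  rewrite <- (core_all A y i j k Hi Hj Hk). unfold Kfe.
  rewrite (Ep i Hi), (Ep j Hj), (Ep k Hk), (Eq i Hi), (Eq j Hj), (Eq k Hk), (Er i Hi), (Er j Hj), (Er k Hk).
  reflexivity.
Qed.

Lemma Gf_decomp A f0 f1 f2 gp gq gr i j k :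
  Gf A f0 f1 f2 gp gq gr i j k =
    f0 * Kf A (mvec Jm gp) (mvec Jm gq) (mvec Jm gr) i j k
  + f1 * Kf A (mvec (M1 A) gp) (mvec (M1 A) gq) (mvec (M1 A) gr) i j k
  + f2 * Kf A (mvec (M2 A) gp) (mvec (M2 A) gq) (mvec (M2 A) gr) i j k.
Proof. cbv beta iota zeta delta [Gf Kf mvec sum6 sum_f_R0]. ring. Qed.

Lemma alg_if A gp gq gr : SHeqs A ->
  (forall m, (m < 6)%nat -> gp m = mvec (C2m A) gr m) ->
  (forall m, (m < 6)%nat -> gq m = mvec (C1m A) gr m) ->
  forall f0 f1 f2 i j k, (i < 6)%nat -> (j < 6)%nat -> (k < 6)%nat ->
  Gf A f0 f1 f2 gp gq gr i j k = 0.
Proof.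
  intros H Hgp Hgq f0 f1 f2 i j k Hi Hj Hk. rewrite Gf_decomp.
  rewrite (Kf_zero A gr _ _ _ i j k H Hi Hj Hk).
  2:{ intros m Hm. rewrite (mvec_ext Jm gp (mvec (C2m A) gr) m Hgp). apply VP_e; assumption. }
  2:{ intros m Hm. rewrite (mvec_ext Jm gq (mvec (C1m A) gr) m Hgq). apply VQ_e; assumption. }
  2:{ intros m Hm. reflexivity. }
  rewrite (Kf_zero A (mvec A gr) _ _ _ i j k H Hi Hj Hk).
  2:{ intros m Hm. rewrite (mvec_ext (M1 A) gp (mvec (C2m A) gr) m Hgp).
      rewrite (M1vec A _ m H Hm). rewrite <- (VP_e A _ m H Hm). apply mvec_ext.
      intros l Hl. apply comm2; assumption. }
  2:{ intros m Hm. rewrite (mvec_ext (M1 A) gq (mvec (C1m A) gr) m Hgq).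
      rewrite (M1vec A _ m H Hm). rewrite <- (VQ_e A _ m H Hm). apply mvec_ext.
      intros l Hl. apply comm1; assumption. }
  2:{ intros m Hm. rewrite (M1vec A _ m H Hm). reflexivity. }
  rewrite (Kf_zero A (mvec A (mvec A gr)) _ _ _ i j k H Hi Hj Hk).
  2:{ intros m Hm. rewrite (mvec_ext (M2 A) gp (mvec (C2m A) gr) m Hgp).
      rewrite (M2vec A _ m H Hm). rewrite <- (VP_e A _ m H Hm). apply mvec_ext.
      intros l Hl. rewrite (mvec_ext A _ (mvec (C2m A) (mvec A gr)) l).
      - apply comm2; assumption.
      - intros n Hn. apply comm2; assumption. }
  2:{ intros m Hm. rewrite (mvec_ext (M2 A) gq (mvec (C1m A) gr) m Hgq).
      rewrite (M2vec A _ m H Hm). rewrite <- (VQ_e A _ m H Hm). apply mvec_ext.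
      intros l Hl. rewrite (mvec_ext A _ (mvec (C1m A) (mvec A gr)) l).
      - apply comm1; assumption.
      - intros n Hn. apply comm1; assumption. }
  2:{ intros m Hm. rewrite (M2vec A _ m H Hm). reflexivity. }
  ring.
Qed.

Lemma cramer (a b c v0 v1 v2 v3 v4 : R) :
  (a^2 - 4*b) * v0 + 2*a*v1 - 3*v2 = 0 ->
  (a^2 - 4*b) * v1 + 2*a*v2 - 3*v3 = 0 ->
  (a^2 - 4*b) * v2 + 2*a*v3 - 3*v4 = 0 ->
  v3 - a*v2 + b*v1 + c*v0 = 0 ->
  v4 - a*v3 + b*v2 + c*v1 = 0 ->
  discR (-a) b c * v0 = 0.
Proof.
  intros e0 e1 e2 k0 k1.
  transitivity ((b^2 + 3*a*c) * ((a^2 - 4*b) * v0 + 2*a*v1 - 3*v2)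
    + (-9*c - a*b) * ((a^2 - 4*b) * v1 + 2*a*v2 - 3*v3)
    + (-3*b + a^2) * ((a^2 - 4*b) * v2 + 2*a*v3 - 3*v4)
    + (-27*c - 6*a*b + a^3) * (v3 - a*v2 + b*v1 + c*v0)
    + (-9*b + 3*a^2) * (v4 - a*v3 + b*v2 + c*v1)).
  - unfold discR. ring.
  - rewrite e0, e1, e2, k0, k1. ring.
Qed.

Lemma alg_onlyif A gp gq gr : SHeqs A ->
  discR (- apoly A) (bp_check A) (pc0e A) <> 0 ->
  (forall i j k, (i < 6)%nat -> (j < 6)%nat -> (k < 6)%nat -> Gf A 1 0 0 gp gq gr i j k = 0) ->
  forall m, (m < 6)%nat -> gq m = mvec (C1m A) gr m /\ gp m = mvec (C2m A) gr m.
Proof.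
  intros H Hd HG.
  set (u := fun m => mvec Jm gp m - VP A gr m).
  set (v := fun m => mvec Jm gq m - VQ A gr m).
  assert (Ku : forall i j k, (i < 6)%nat -> (j < 6)%nat -> (k < 6)%nat -> Kfe A u v (fun _ => 0) i j k = 0).
  { intros i j k Hi Hj Hk.
    transitivity (Kfe A (mvec Jm gp) (mvec Jm gq) (mvec Jm gr) i j k - Kfe A (VP A gr) (VQ A gr) (VR gr) i j k).
    - unfold Kfe, u, v, VR. ring.
    - rewrite (core_all A gr i j k Hi Hj Hk).
      rewrite <- (Kf_e A _ _ _ i j k H Hi Hj Hk).
      pose proof (HG i j k Hi Hj Hk) as h. rewrite Gf_decomp in h. lra. }
  set (a := apoly A). set (b := bp_check A). set (c := pc0e A).
  set (E1 := fun m => 2 * u m + a * v m - mvT A v m).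
  set (E2 := fun m => (a * u m - mvT A u m) + (a ^ 2 - 2 * b) * v m - mvT A (mvT A v) m).
  assert (HE1 : forall m, (m < 6)%nat -> E1 m = 0).
  { intros m Hm. unfold E1.
    assert (h : 2 * (2 * u m + apoly A * v m - mvT A v m) = 0).
    { rewrite <- (E1_id A u v m Hm). apply sum6_zero. intros j Hj. apply sum6_zero.
      intros k Hk. rewrite (Ku m j k Hm Hj Hk). ring. }
    fold a in h. lra. }
  assert (HE2 : forall m, (m < 6)%nat -> E2 m = 0).
  { intros m Hm. unfold E2.
    assert (h : 2 * ((apoly A * u m - mvT A u m) + (apoly A ^ 2 - 2 * bp_check A) * v m - mvT A (mvT A v) m) = 0).
    { rewrite <- (E2_id A u v m Hm). apply sum6_zero. intros j Hj. apply sum6_zero.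
      intros k Hk. rewrite (Ku m j k Hm Hj Hk). ring. }
    fold a b in h. lra. }
  set (d := fun m => (a^2 - 4*b) * v m + 2*a * mvT A v m - 3 * mvT A (mvT A v) m).
  assert (Hd0 : forall m, (m < 6)%nat -> d m = 0).
  { intros m Hm.
    transitivity (2 * E2 m - a * E1 m + mvT A E1 m).
    - unfold d, E1, E2, mvT. cbv beta iota zeta delta [sum6 sum_f_R0]. ring.
    - rewrite (HE1 m Hm), (HE2 m Hm), (mvT_zero A E1 m HE1). ring. }
  assert (Hv : forall m, (m < 6)%nat -> v m = 0).
  { intros m Hm.
    assert (e1 : (a^2 - 4*b) * mvT A v m + 2*a * mvT A (mvT A v) m - 3 * mvT A (mvT A (mvT A v)) m = 0).
    { rewrite <- (mvT_zero A d m Hd0). unfold d, mvT. cbv beta iota zeta delta [sum6 sum_f_R0]. ring. }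
    assert (e2 : (a^2 - 4*b) * mvT A (mvT A v) m + 2*a * mvT A (mvT A (mvT A v)) m
                 - 3 * mvT A (mvT A (mvT A (mvT A v))) m = 0).
    { assert (Hd1 : forall l, (l < 6)%nat -> mvT A d l = 0) by (intros; apply mvT_zero; exact Hd0).
      rewrite <- (mvT_zero A (mvT A d) m Hd1). unfold d, mvT. cbv beta iota zeta delta [sum6 sum_f_R0]. ring. }
    pose proof (cubic_id A v m Hm) as k0. pose proof (cubic_id A (mvT A v) m Hm) as k1.
    fold a b c in k0, k1.
    pose proof (cramer a b c _ _ _ _ _ (Hd0 m Hm) e1 e2 k0 k1) as hc.
    apply Rmult_integral in hc. destruct hc as [hc|hc]; [contradiction | exact hc]. }
  assert (Hu : forall m, (m < 6)%nat -> u m = 0).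
  { intros m Hm. pose proof (HE1 m Hm) as h. unfold E1 in h.
    rewrite (Hv m Hm), (mvT_zero A v m Hv) in h. lra. }
  intros m Hm. split.
  - set (dl := fun l => gq l - mvec (C1m A) gr l).
    assert (hv : forall l, (l < 6)%nat -> mvec Jm dl l = 0).
    { intros l Hl. rewrite <- (Hv l Hl). unfold v. rewrite <- (VQ_e A gr l H Hl).
      unfold dl, mvec. cbv beta iota zeta delta [sum6 sum_f_R0]. ring. }
    pose proof (Jinv dl m Hm) as h. rewrite (mvec_zero Jm _ m hv) in h. unfold dl in h. lra.
  - set (dl := fun l => gp l - mvec (C2m A) gr l).
    assert (hv : forall l, (l < 6)%nat -> mvec Jm dl l = 0).
    { intros l Hl. rewrite <- (Hu l Hl). unfold u. rewrite <- (VP_e A gr l H Hl).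
      unfold dl, mvec. cbv beta iota zeta delta [sum6 sum_f_R0]. ring. }
    pose proof (Jinv dl m Hm) as h. rewrite (mvec_zero Jm _ m hv) in h. unfold dl in h. lra.
Qed.

Lemma sq_coef (x2 x1 x0 y2 y1 y0 : R) :
  (forall l, (l^3 + x2*l^2 + x1*l + x0)^2 = (l^3 + y2*l^2 + y1*l + y0)^2) ->
  x2 = y2 /\ x1 = y1 /\ x0 = y0.
Proof.
  intro H.
  assert (K : forall l, 2*(x2-y2)*l^5 + (x2^2+2*x1-y2^2-2*y1)*l^4 + (2*x0+2*x2*x1-2*y0-2*y2*y1)*l^3
     + (x1^2+2*x2*x0-y1^2-2*y2*y0)*l^2 + (2*x1*x0-2*y1*y0)*l + (x0^2-y0^2) = 0).
  { intro l. pose proof (H l) as h. 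
    transitivity ((l^3 + x2*l^2 + x1*l + x0)^2 - (l^3 + y2*l^2 + y1*l + y0)^2); [ring | rewrite h; ring]. }
  set (d5 := 2*(x2-y2)) in K. set (d4 := x2^2+2*x1-y2^2-2*y1) in K.
  set (d3 := 2*x0+2*x2*x1-2*y0-2*y2*y1) in K. set (d2 := x1^2+2*x2*x0-y1^2-2*y2*y0) in K.
  set (d1 := 2*x1*x0-2*y1*y0) in K. set (d0 := x0^2-y0^2) in K.
  pose proof (K 0) as k0. pose proof (K 1) as k1. pose proof (K 2) as k2.
  pose proof (K 3) as k3. pose proof (K 4) as k4. pose proof (K 5) as k5.
  simpl in k0, k1, k2, k3, k4, k5.
  assert (z5 : d5 = 0) by lra. assert (z4 : d4 = 0) by lra. assert (z3 : d3 = 0) by lra.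
  unfold d5, d4, d3 in *.
  assert (e2 : x2 = y2) by lra. subst y2.
  assert (e1 : x1 = y1) by lra. subst y1.
  assert (e0 : x0 = y0) by lra.
  auto.
Qed.

Lemma disc_of_generic A : SHeqs A -> generic_sh A -> discR (- apoly A) (bp_check A) (pc0e A) <> 0.
Proof.
  intros H (c2 & c1 & c0 & Hc & z1 & z2 & z3 & n12 & n13 & n23 & f1 & f2 & f3).
  assert (Hs : forall l, (l^3 + (- apoly A)*l^2 + bp_check A*l + pc0e A)^2 = (l^3 + c2*l^2 + c1*l + c0)^2).
  { intro l. rewrite <- Hc, char_id by exact H. f_equal. ring. }
  destruct (sq_coef _ _ _ _ _ _ Hs) as (e2 & e1 & e0). rewrite e2, e1, e0.
  exact (CX.disc_nz c2 c1 c0 z1 z2 z3 n12 n13 n23 f1 f2 f3).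
Qed.

Lemma deriv_of_smooth f : smooth f -> forall l x, (l < 6)%nat ->
  derivable_pt_lim (fun t => ev6 f (upd x l t)) (x l) (pd f l x).
Proof.
  intros Hs l x Hl. pose proof (Hs 1%nat) as H1. cbn [Ck] in H1.
  destruct H1 as [_ [g [Hg _]]]. pose proof (Hg l x Hl) as D.
  rewrite (pd_spec _ _ _ _ D). exact D.
Qed.

Lemma pd_PiT eps A p q r j k l x :
  derivable_pt_lim (fun t => ev6 p (upd x l t)) (x l) (pd p l x) ->
  derivable_pt_lim (fun t => ev6 q (upd x l t)) (x l) (pd q l x) ->
  derivable_pt_lim (fun t => ev6 r (upd x l t)) (x l) (pd r l x) ->
  pd (PiT eps A p q r j k) l x = -(eps^2) * (pd p l x * Jm j k + pd q l x * M1 A j k + pd r l x * M2 A j k).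
Proof.
  intros Dp Dq Dr. apply pd_spec.
  exact (dlin _ _ _ (x l) _ _ _ (Jm j k) (M1 A j k) (M2 A j k) eps Dp Dq Dr).
Qed.

Lemma jac_eq A p q r eps x i j k : smooth p -> smooth q -> smooth r ->
  sum6 (fun l => ev6 (PiT eps A p q r i l) x * pd (PiT eps A p q r j k) l x)
+ sum6 (fun l => ev6 (PiT eps A p q r j l) x * pd (PiT eps A p q r k i) l x)
+ sum6 (fun l => ev6 (PiT eps A p q r k l) x * pd (PiT eps A p q r i j) l x)
= -(eps^2) * Gf A 1 0 0 (fun l => pd p l x) (fun l => pd q l x) (fun l => pd r l x) i j k
  + eps^4 * Gf A (ev6 p x) (ev6 q x) (ev6 r x) (fun l => pd p l x) (fun l => pd q l x) (fun l => pd r l x) i j k.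
Proof.
  intros Hp Hq Hr.
  assert (D : forall a b l, (l < 6)%nat -> pd (PiT eps A p q r a b) l x =
     -(eps^2) * (pd p l x * Jm a b + pd q l x * M1 A a b + pd r l x * M2 A a b)).
  { intros a b l Hl. apply pd_PiT; apply deriv_of_smooth; assumption. }
  rewrite (sum6_ext (fun l => ev6 (PiT eps A p q r i l) x * pd (PiT eps A p q r j k) l x) (fun l => ev6 (PiT eps A p q r i l) x *
     (-(eps^2) * (pd p l x * Jm j k + pd q l x * M1 A j k + pd r l x * M2 A j k))))
    by (intros l Hl; cbv beta; rewrite D by exact Hl; reflexivity).
  rewrite (sum6_ext (fun l => ev6 (PiT eps A p q r j l) x * pd (PiT eps A p q r k i) l x) (fun l => ev6 (PiT eps A p q r j l) x *
     (-(eps^2) * (pd p l x * Jm k i + pd q l x * M1 A k i + pd r l x * M2 A k i))))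
    by (intros l Hl; cbv beta; rewrite D by exact Hl; reflexivity).
  rewrite (sum6_ext (fun l => ev6 (PiT eps A p q r k l) x * pd (PiT eps A p q r i j) l x) (fun l => ev6 (PiT eps A p q r k l) x *
     (-(eps^2) * (pd p l x * Jm i j + pd q l x * M1 A i j + pd r l x * M2 A i j))))
    by (intros l Hl; cbv beta; rewrite D by exact Hl; reflexivity).
  cbv beta iota zeta delta [sum6 sum_f_R0 Gf ev6 PiT M1 M2]. ring.
Qed.

Theorem mainTheorem13 (A : Mat) (p q r : R6fun) :
  skew_hamiltonian A -> generic_sh A ->
  smooth p -> smooth q -> smooth r ->
  ((forall eps : R, poisson_tensor (PiT eps A p q r)) <->
   (grad_rel q (C1m A) r /\ grad_rel p (C2m A) r)).
Proof.
  intros Hsk Hgen Hp Hq Hr. pose proof (sh_of A Hsk) as H.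
  split.
  - intros HP.
    assert (HG : forall x i j k, (i < 6)%nat -> (j < 6)%nat -> (k < 6)%nat ->
       Gf A 1 0 0 (fun l => pd p l x) (fun l => pd q l x) (fun l => pd r l x) i j k = 0).
    { intros x i j k Hi Hj Hk.
      destruct (HP 1) as [_ J1]. destruct (HP 2) as [_ J2].
      pose proof (J1 i j k x Hi Hj Hk) as h1. pose proof (J2 i j k x Hi Hj Hk) as h2.
      rewrite (jac_eq A p q r 1 x i j k Hp Hq Hr) in h1.
      rewrite (jac_eq A p q r 2 x i j k Hp Hq Hr) in h2.
      set (G0 := Gf A 1 0 0 (fun l => pd p l x) (fun l => pd q l x) (fun l => pd r l x) i j k) in *.
      set (G1 := Gf A (ev6 p x) (ev6 q x) (ev6 r x) (fun l => pd p l x) (fun l => pd q l x) (fun l => pd r l x) i j k) in *.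
      assert (h1' : - G0 + G1 = 0) by (rewrite <- h1; ring).
      assert (h2' : - 4 * G0 + 16 * G1 = 0) by (rewrite <- h2; ring).
      lra. }
    pose proof (disc_of_generic A H Hgen) as Hd.
    split.
    + intros x i Hi. exact (proj1 (alg_onlyif A _ _ _ H Hd (HG x) i Hi)).
    + intros x i Hi. exact (proj2 (alg_onlyif A _ _ _ H Hd (HG x) i Hi)).
  - intros [Hgq Hgp] eps. split.
    + intros i j x Hi Hj. cbv beta iota zeta delta [ev6 PiT].
      fold (M1 A). fold (M2 A).
      rewrite (Jm_anti i j Hi Hj).
      rewrite (M1_e A i j H Hi Hj), (M1_e A j i H Hj Hi), (M1e_anti A i j Hi Hj).
      rewrite (M2_e A i j H Hi Hj), (M2_e A j i H Hj Hi), (M2e_anti A i j Hi Hj).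
      ring.
    + intros i j k x Hi Hj Hk. rewrite (jac_eq A p q r eps x i j k Hp Hq Hr).
      rewrite (alg_if A _ _ _ H (fun m Hm => Hgp x m Hm) (fun m Hm => Hgq x m Hm) 1 0 0 i j k Hi Hj Hk).
      rewrite (alg_if A _ _ _ H (fun m Hm => Hgp x m Hm) (fun m Hm => Hgq x m Hm) _ _ _ i j k Hi Hj Hk).
      ring.
Qed.
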